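(* Let $N\ge1$, $M=2^N$, and let $\mathcal{A}=\{a_0,\dots,a_{M-1}\}\subset\mathbb{C}$ be a constellation with an arbitrary labelling (in particular, not necessarily a Gray labelling). Suppose there is a family of rectangles in $\mathbb{C}$, each having four points of $\mathcal{A}$ as its vertices, such that: (1) the vertices of these rectangles cover all points of $\mathcal{A}$; (2) no two rectangles share a vertex; (3) in each rectangle, the labels of the two points of one diagonal pair both contain an odd number of $0$s in their $N$-bit binary representations and the labels of the two points of the other diagonal pair both contain an even number of $0$s. Then for all $y,h\in\mathbb{C}$, with $d_i=|y-ha_i|^2$, the coefficient $\bar d_{\{0,\dots,N-1\}}$ of the monomial $\prod_{n=0}^{N-1}z_n$ in the associated pseudo-Boolean function $f$ is zero.
   Context: For $i\in\{0,\dots,M-1\}$ write its $N$-bit binary representation as $b_0(i)\cdots b_{N-1}(i)$ with $b_0$ the most significant bit; this bit string is the label of $a_i$. Given $d_0,\dots,d_{M-1}$, define $f(z_0,\dots,z_{N-1})=\sum_{i}d_i\prod_{n=0}^{N-1}B_{i,n}(z_n)$, $z_n\in\{0,1\}$, with $B_{i,n}(z)=z$ if $b_n(i)=1$ and $1-z$ if $b_n(i)=0$. Its multilinear expansion is $f=\sum_{S\subseteq\{0,\dots,N-1\}}\bar d_S\prod_{n\in S}z_n$ with $\bar d_S=\sum_{i:\,b_n(i)=0\ \forall n\notin S}d_i\prod_{n\in S}(-1)^{1-b_n(i)}$. *)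

(* Defs.v *)
(* Complex numbers: an arbitrary numClosedFieldType C
   (e.g. algC, or complex R over a real closed field). *)
From mathcomp Require Import all_boot all_order all_algebra.
Set Implicit Arguments. Unset Strict Implicit. Unset Printing Implicit Defensive.
Import Order.TTheory GRing.Theory Num.Theory.
Local Open Scope ring_scope.

(* b_n(i): bit n of the N-bit label of i, b_0 the most significant bit. *)
Definition bit (N : nat) (n : 'I_N) (i : nat) : bool := odd (i %/ 2 ^ (N.-1 - n)).

Definition nzeros (N : nat) (i : nat) : nat := #|[set n : 'I_N | ~~ bit n i]|.

Definition dbar (C : comNzRingType) (N : nat) (d : 'I_(2 ^ N) -> C) (S : {set 'I_N}) : C :=
  \sum_(i : 'I_(2 ^ N) | [forall n : 'I_N, (n \notin S) ==> ~~ bit n i])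
     d i * \prod_(n in S) (-1) ^+ (1 - bit n i).

(* p, q, r, s (in this cyclic order) are the vertices of a (non-degenerate)
   rectangle: a parallelogram with a right angle at p and non-zero sides.
   Its diagonals are {p, r} and {q, s}. *)
Definition is_rectangle (C : numClosedFieldType) (p q r s : C) : Prop :=
  q - p = r - s /\ 'Re ((q - p) * (s - p)^*) = 0 /\ q != p /\ s != p.

(* Main.v *)
Require Import Defs.
From mathcomp Require Import all_boot all_order all_algebra.
From mathcomp Require Import ring.
Import Order.TTheory GRing.Theory Num.Theory.
Local Open Scope ring_scope.

Lemma flag (C : numClosedFieldType) (p q r s y h : C) :
  is_rectangle p q r s ->
  `|y - h * p| ^+ 2 + `|y - h * r| ^+ 2 = `|y - h * q| ^+ 2 + `|y - h * s| ^+ 2.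
Proof.
move=> [e [hre _]].
have -> : r = q - p + s by rewrite e subrK.
move: hre; rewrite ReE => /eqP; rewrite mulf_eq0 invr_eq0 pnatr_eq0 orbF => /eqP hre.
rewrite !normCK !(rmorphB, rmorphD, rmorphM) /=.
apply/eqP; rewrite -subr_eq0; apply/eqP.
rewrite rmorphM /= in hre.
transitivity (h * h^* * ((q - p) * (s - p)^* + (q - p)^* * (s - p)^*^*)); last by rewrite hre mulr0.
rewrite !(rmorphB, rmorphM) /= !conjCK; ring.
Qed.

Lemma rect_distinct (C : numClosedFieldType) (p q r s : C) :
  is_rectangle p q r s -> p != r /\ q != s.
Proof.
move=> [e [hre [hq hs]]].
move: hre; rewrite ReE => /eqP; rewrite mulf_eq0 invr_eq0 pnatr_eq0 orbF => /eqP.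
rewrite rmorphM /= conjCK => hre.
have hu : (q - p) * (q - p)^* != 0 by rewrite -normCK sqrf_eq0 normr_eq0 subr_eq0.
have Er : r = q - p + s by rewrite e subrK.
split; apply/eqP => E.
- have ev : s - p = - (q - p) by apply/(addrI (q - p)); rewrite subrr addrA -Er -E subrr.
  have : (q - p) * (q - p)^* *+ 2 = - ((q - p) * (s - p)^* + (q - p)^* * (s - p)).
    by rewrite ev rmorphN; ring.
  by rewrite hre oppr0 => /eqP; rewrite mulrn_eq0 /= (negbTE hu).
- have ev : s - p = q - p by rewrite E.
  have : (q - p) * (q - p)^* *+ 2 = ((q - p) * (s - p)^* + (q - p)^* * (s - p)).
    by rewrite ev; ring.
  by rewrite hre => /eqP; rewrite mulrn_eq0 /= (negbTE hu).
Qed.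

Lemma sign_nz (C : comNzRingType) (N : nat) (i : nat) :
  \prod_(n in [set: 'I_N]) ((-1 : C) ^+ (1 - bit n i)) = (-1) ^+ odd (nzeros N i).
Proof.
rewrite signr_odd /nzeros.
rewrite (eq_bigr (fun n => if ~~ bit n i then -1 else 1)); last by move=> n _; case: bit.
rewrite -big_mkcondr /= prodr_const; congr (_ ^+ _).
by rewrite cardsE; apply: eq_card => n; rewrite -!topredE /= in_setT.
Qed.

Lemma quad (R : comNzRingType) (A B Cr D sA sB : R) :
  sB = - sA -> A + Cr = B + D -> A * sA + (B * sB + (Cr * sA + (D * sB + 0))) = 0.
Proof.
move=> -> e; have -> : A = B + D - Cr by rewrite -e addrK.
ring.
Qed.

Theorem corollary1 (C : numClosedFieldType) (N : nat) (hN : (1 <= N)%N)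
    (a : 'I_(2 ^ N) -> C) (ha : injective a)
    (K : nat) (p q r s : 'I_K -> 'I_(2 ^ N))
    (hrect : forall k, is_rectangle (a (p k)) (a (q k)) (a (r k)) (a (s k)))
    (hcover : forall j : 'I_(2 ^ N), exists k, j \in [:: p k; q k; r k; s k])
    (hdisj : forall k l, k != l -> forall j : 'I_(2 ^ N),
        j \in [:: p k; q k; r k; s k] -> j \notin [:: p l; q l; r l; s l])
    (hpar : forall k,
        (odd (nzeros N (p k)) && odd (nzeros N (r k))
          && ~~ odd (nzeros N (q k)) && ~~ odd (nzeros N (s k)))
        || (~~ odd (nzeros N (p k)) && ~~ odd (nzeros N (r k))
          && odd (nzeros N (q k)) && odd (nzeros N (s k))))
    (y h : C) :
  dbar (fun i => `|y - h * a i| ^+ 2) [set: 'I_N] = 0.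
Proof.
rewrite /dbar (eq_bigl xpredT); last by move=> i; apply/forallP => n; rewrite in_setT.
pose g := fun i : 'I_(2 ^ N) =>
  `|y - h * a i| ^+ 2 * \prod_(n in [set: 'I_N]) ((-1 : C) ^+ (1 - bit n i)).
rewrite (eq_bigr g) //.
have -> : \sum_(i | xpredT i) g i =
    \sum_i \sum_k (if i \in [:: p k; q k; r k; s k] then g i else 0).
  apply: eq_bigr => i _; have [k0 hk0] := hcover i.
  rewrite (bigD1 k0) //= hk0 big1 ?addr0 // => l hl.
  by rewrite (negbTE (hdisj k0 l _ i hk0)) // eq_sym.
rewrite exchange_big /= big1 // => k _.
rewrite -big_mkcond /= -big_uniq /=; last first.
  have [hpr hqs] := @rect_distinct _ _ _ _ _ (hrect k).
  have nq : forall u v : 'I_(2 ^ N), a u != a v -> u != v.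
    by move=> u v; apply: contra => /eqP ->.
  rewrite !inE !negb_or (nq _ _ hpr) (nq _ _ hqs) /= !andbT.
  move: (hpar k).
  case: (p k =P q k) => [->|]; first by case: odd; case: odd; case: odd.
  case: (p k =P s k) => [->|]; first by case: odd; case: odd; case: odd.
  case: (q k =P r k) => [->|]; first by case: odd; case: odd; case: odd.
  case: (r k =P s k) => [->|]; first by case: odd; case: odd; case: odd.
  by [].
rewrite !big_cons big_nil /g !sign_nz.
have hA : odd (nzeros N (r k)) = odd (nzeros N (p k)).
  by move: (hpar k); case: (odd (nzeros N (p k))); case: odd; case: odd; case: odd.
have hB : odd (nzeros N (s k)) = odd (nzeros N (q k)).
  by move: (hpar k); case: (odd (nzeros N (p k))); case: odd; case: odd; case: odd.
have hC : odd (nzeros N (q k)) = ~~ odd (nzeros N (p k)).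
  by move: (hpar k); case: (odd (nzeros N (p k))); case: odd; case: odd; case: odd.
rewrite hA hB hC; apply: quad; first by case: odd; rewrite ?opprK.
exact: flag.
Qed.
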